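(* Let $S=s_1,\ldots,s_n$ be a sequence of positive real numbers, let $\alpha>1$, $\gamma>0$, let $k$ be a positive integer and $\epsilon>0$. Let $(L^*,\beta^* )$ be an optimal solution of $\textsc{Exp}(\alpha)$ for $S,\alpha,\gamma,k$, and let $g=(\prod_{i=1}^n s_i)^{1/n}$. Let $(L,\beta)$ be the output of $\textit{ExpAlpha}(S,\alpha,\gamma,k,\epsilon)$. Then \[ \mathrm{score}_{\exp}(L,S;\alpha,\beta,\gamma)-n\log g\le(1+\epsilon)\big(\mathrm{score}_{\exp}(L^*,S;\alpha,\beta^*,\gamma)-n\log g\big). \] Moreover, if $g\ge1$, then $\mathrm{score}_{\exp}(L,S;\alpha,\beta,\gamma)\le(1+\epsilon)\,\mathrm{score}_{\exp}(L^*,S;\alpha,\beta^*,\gamma)$.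
   Context: A level sequence is $L=\ell_1,\ldots,\ell_n$ of integers with $0\le\ell_i\le k$; set $\ell_0=0$. The penalty is $\mathrm{pen}(x,y)=\max(y-x,0)\,\gamma\log n$. The exponential density is $p_{\exp}(s;\lambda)=\lambda e^{-\lambda s}$. For $\alpha\ge1$, $\beta>0$: $\mathrm{score}_{\exp}(L,S;\alpha,\beta,\gamma)=\sum_{i=1}^n\big[-\log p_{\exp}(s_i;\beta\alpha^{\ell_i})+\mathrm{pen}(\ell_{i-1},\ell_i)\big]$. Problem $\textsc{Exp}(\alpha)$: given $S,\alpha,\gamma,k$, find $L$ and $\beta>0$ minimizing this score. $\textit{Viterbi}(S,\alpha,\beta,\gamma,k,p_{\exp})$ returns a level sequence minimizing the score for fixed $\alpha,\beta$. Algorithm $\textit{ExpAlpha}(S,\alpha,\gamma,k,\epsilon)$: let $\mu=\frac1n\sum_i s_i$ and $\beta=1/\mu$; while $\beta\ge1/(\alpha^k\mu)$: run $L=\textit{Viterbi}(S,\alpha,\beta,\gamma,k,p_{\exp})$ and set $\beta\leftarrow\beta/(1+\epsilon)$. Return the tested pair $(L,\beta)$ with the smallest score. *)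

(* Defs.v *)
From Stdlib Require Import Reals Lra Lia.
Open Scope R_scope.

Fixpoint sum1n (n : nat) (f : nat -> R) : R :=
  match n with
  | O => 0
  | S m => sum1n m f + f (S m)
  end.

Fixpoint prod1n (n : nat) (f : nat -> R) : R :=
  match n with
  | O => 1
  | S m => prod1n m f * f (S m)
  end.

(* A level sequence is L : nat -> nat, read at indices 1..n;
   the convention l_0 = 0 is enforced by [prevlvl]. *)
Definition level_seq (n k : nat) (L : nat -> nat) : Prop :=
  forall i, (1 <= i <= n)%nat -> (L i <= k)%nat.

Definition prevlvl (L : nat -> nat) (i : nat) : nat :=
  match i with
  | O => O
  | S O => O
  | S j => L j
  end.

Definition pen (n : nat) (gamma : R) (x y : nat) : R :=
  Rmax (INR y - INR x) 0 * gamma * ln (INR n).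

Definition p_exp (s lambda : R) : R := lambda * exp (- lambda * s).

Definition score_exp (n : nat) (s : nat -> R) (L : nat -> nat)
  (alpha beta gamma : R) : R :=
  sum1n n (fun i =>
    - ln (p_exp (s i) (beta * alpha ^ (L i))) + pen n gamma (prevlvl L i) (L i)).

Definition exp_optimal (n : nat) (s : nat -> R) (alpha gamma : R) (k : nat)
  (Lopt : nat -> nat) (bopt : R) : Prop :=
  level_seq n k Lopt /\ 0 < bopt /\
  forall L beta, level_seq n k L -> 0 < beta ->
    score_exp n s Lopt alpha bopt gamma <= score_exp n s L alpha beta gamma.

(* Any possible output of Viterbi(S, alpha, beta, gamma, k, p_exp):
   a level sequence minimizing the score for fixed alpha, beta. *)
Definition viterbi_out (n : nat) (s : nat -> R) (alpha beta gamma : R) (k : nat)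
  (L : nat -> nat) : Prop :=
  level_seq n k L /\
  forall L', level_seq n k L' ->
    score_exp n s L alpha beta gamma <= score_exp n s L' alpha beta gamma.

Definition mean (n : nat) (s : nat -> R) : R := sum1n n s / INR n.

Definition beta_j (n : nat) (s : nat -> R) (eps : R) (j : nat) : R :=
  (1 / mean n s) / (1 + eps) ^ j.

(* beta_j is tested by the while loop iff beta_j >= 1/(alpha^k mu)
   (the sequence beta_j is decreasing, so the loop tests exactly these j). *)
Definition tested (n : nat) (s : nat -> R) (alpha : R) (k : nat) (eps : R)
  (j : nat) : Prop :=
  beta_j n s eps j >= 1 / (alpha ^ k * mean n s).

(* (L, beta) is a possible output of ExpAlpha(S, alpha, gamma, k, eps):
   for some choice Ls j of the Viterbi output at each tested beta_j,
   (L, beta) is a tested pair of smallest score. *)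
Definition expalpha_out (n : nat) (s : nat -> R) (alpha gamma : R) (k : nat)
  (eps : R) (L : nat -> nat) (beta : R) : Prop :=
  exists (Ls : nat -> nat -> nat) (j : nat),
    (forall j', tested n s alpha k eps j' ->
        viterbi_out n s alpha (beta_j n s eps j') gamma k (Ls j')) /\
    tested n s alpha k eps j /\
    L = Ls j /\ beta = beta_j n s eps j /\
    (forall j', tested n s alpha k eps j' ->
        score_exp n s (Ls j) alpha (beta_j n s eps j) gamma <=
        score_exp n s (Ls j') alpha (beta_j n s eps j') gamma).

Definition geo_mean (n : nat) (s : nat -> R) : R :=
  Rpower (prod1n n s) (1 / INR n).

(* Main.v *)
Require Import Defs.
From Stdlib Require Import Reals.
From Stdlib Require Import Lra Lia.
Open Scope R_scope.

Lemma sum_le n f g : (forall i, (1 <= i <= n)%nat -> f i <= g i) ->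
  sum1n n f <= sum1n n g.
Proof.
  induction n; simpl; intros H; [lra|].
  assert (sum1n n f <= sum1n n g) by (apply IHn; intros; apply H; lia).
  assert (f (S n) <= g (S n)) by (apply H; lia). lra.
Qed.

Lemma sum_ext n f g : (forall i, (1 <= i <= n)%nat -> f i = g i) ->
  sum1n n f = sum1n n g.
Proof.
  intros H; apply Rle_antisym; apply sum_le; intros i Hi; rewrite (H i Hi); lra.
Qed.

Lemma sum_plus n f g : sum1n n (fun i => f i + g i) = sum1n n f + sum1n n g.
Proof. induction n; simpl; [lra|]. rewrite IHn; lra. Qed.

Lemma sum_scal n c f : sum1n n (fun i => c * f i) = c * sum1n n f.
Proof. induction n; simpl; [lra|]. rewrite IHn; lra. Qed.

Lemma sum_const n c : sum1n n (fun _ => c) = INR n * c.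
Proof. induction n; simpl sum1n; [simpl; lra|]. rewrite IHn, S_INR; lra. Qed.

Lemma ln_prod n s : (forall i, (1 <= i <= n)%nat -> 0 < s i) ->
  0 < prod1n n s /\ ln (prod1n n s) = sum1n n (fun i => ln (s i)).
Proof.
  induction n; simpl; intros H.
  - split; [lra| apply ln_1].
  - destruct IHn as [H1 H2]; [intros; apply H; lia|].
    assert (0 < s (S n)) by (apply H; lia).
    split; [apply Rmult_lt_0_compat; auto|].
    rewrite ln_mult; auto. rewrite H2; lra.
Qed.

Lemma ln_le_xm1 x : 0 < x -> ln x <= x - 1.
Proof. intros Hx. pose proof (exp_ineq1_le (ln x)). rewrite exp_ln in H; lra. Qed.

Lemma ln_ge0 x : 1 <= x -> 0 <= ln x.
Proof. intros H. destruct (Rle_lt_or_eq_dec _ _ H) as [h|h].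
  - rewrite <- ln_1. left; apply ln_increasing; lra.
  - rewrite <- h, ln_1; lra. Qed.

Definition AL n s (L : nat -> nat) alpha := sum1n n (fun i => alpha ^ (L i) * s i).
Definition DL n (L : nat -> nat) alpha gamma :=
  sum1n n (fun i => - ln (alpha ^ (L i)) + pen n gamma (prevlvl L i) (L i)).

Lemma score_decomp n s L alpha beta gamma : 0 < beta -> 0 < alpha ->
  score_exp n s L alpha beta gamma =
  - INR n * ln beta + beta * AL n s L alpha + DL n L alpha gamma.
Proof.
  intros Hb Ha. unfold score_exp, AL, DL, p_exp.
  rewrite (sum_ext n _ (fun i => (fun _ => - ln beta) i + ((fun i => beta * (alpha ^ L i * s i)) i
     + (fun i => - ln (alpha ^ (L i)) + pen n gamma (prevlvl L i) (L i)) i))).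
  - rewrite !sum_plus, sum_const, sum_scal. lra.
  - intros i _. assert (0 < alpha ^ L i) by (apply pow_lt; auto).
    rewrite ln_mult, ln_exp, ln_mult; auto.
    + lra.
    + apply Rmult_lt_0_compat; auto.
    + apply exp_pos.
Qed.

Lemma score_lower n s L alpha beta gamma : (0 < n)%nat ->
  (forall i, (1 <= i <= n)%nat -> 0 < s i) -> 0 < beta -> 0 < alpha -> 0 < gamma ->
  INR n + sum1n n (fun i => ln (s i)) <= score_exp n s L alpha beta gamma.
Proof.
  intros Hn Hs Hb Ha Hg. unfold score_exp.
  replace (INR n) with (INR n * 1) by ring.
  rewrite <- (sum_const n 1), <- sum_plus.
  apply sum_le. intros i Hi. unfold p_exp, pen.
  set (l := beta * alpha ^ L i).
  assert (0 < l) by (unfold l; apply Rmult_lt_0_compat; auto; apply pow_lt; auto).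
  assert (0 < s i) by auto.
  rewrite ln_mult, ln_exp; [|auto|apply exp_pos].
  pose proof (ln_le_xm1 (l * s i)) as Hl. rewrite ln_mult in Hl; auto.
  assert (0 <= Rmax (INR (L i) - INR (prevlvl L i)) 0) by apply Rmax_r.
  assert (0 <= ln (INR n)) by (apply ln_ge0; apply (le_INR 1); lia).
  assert (0 <= Rmax (INR (L i) - INR (prevlvl L i)) 0 * gamma * ln (INR n)).
  { apply Rmult_le_pos; auto. apply Rmult_le_pos; lra. }
  assert (0 < l * s i) by (apply Rmult_lt_0_compat; auto).
  specialize (Hl H4). lra.
Qed.

Lemma find_j b0 q x : 1 < q -> 0 < b0 -> 0 < x -> x <= b0 ->
  exists j, b0 / q ^ (S j) < x /\ x <= b0 / q ^ j.
Proof.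
  intros Hq Hb Hx Hxb.
  destruct (Pow_x_infinity q) with (b := b0 / x + 1) as [N HN].
  { rewrite Rabs_pos_eq; lra. }
  specialize (HN N (le_n N)). rewrite Rabs_pos_eq in HN by (apply pow_le; lra).
  assert (HqN : 0 < q ^ N) by (apply pow_lt; lra).
  assert (H0 : b0 / q ^ N < x).
  { apply Rmult_lt_reg_r with (q ^ N); auto. unfold Rdiv.
    rewrite Rmult_assoc, Rinv_l by lra.
    assert (b0 / x * x = b0) by (field; lra).
    assert (b0 / x * x < q ^ N * x) by (apply Rmult_lt_compat_r; lra). lra. }
  clear HN HqN. revert H0. induction N; intros H0.
  - simpl in H0. unfold Rdiv in H0. rewrite Rinv_1 in H0. lra.
  - destruct (Rlt_le_dec (b0 / q ^ N) x) as [h|h].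
    + apply IHN; auto.
    + exists N; auto.
Qed.

Theorem proposition6 (n : nat) (s : nat -> R) (alpha gamma : R) (k : nat)
  (eps : R) (Lopt : nat -> nat) (bopt : R) (L : nat -> nat) (beta : R) :
  (0 < n)%nat ->
  (forall i, (1 <= i <= n)%nat -> 0 < s i) ->
  1 < alpha -> 0 < gamma -> (0 < k)%nat -> 0 < eps ->
  exp_optimal n s alpha gamma k Lopt bopt ->
  expalpha_out n s alpha gamma k eps L beta ->
  (score_exp n s L alpha beta gamma - INR n * ln (geo_mean n s)
     <= (1 + eps) * (score_exp n s Lopt alpha bopt gamma - INR n * ln (geo_mean n s)))
  /\
  (geo_mean n s >= 1 ->
     score_exp n s L alpha beta gamma <= (1 + eps) * score_exp n s Lopt alpha bopt gamma).
Proof.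
  intros Hn Hs Ha Hg Hk He [HLo [Hbo Hopt]] [Ls [j0 [Hvit [Ht0 [-> [-> Hmin]]]]]].
  assert (HnR : 0 < INR n) by (apply lt_0_INR; lia).
  destruct (ln_prod n s Hs) as [Hp Hlp].
  assert (HG : INR n * ln (geo_mean n s) = sum1n n (fun i => ln (s i))).
  { unfold geo_mean. rewrite ln_Rpower, Hlp. field. lra. }
  rewrite HG.
  set (G := sum1n n (fun i => ln (s i))).
  set (OPT := score_exp n s Lopt alpha bopt gamma).
  assert (HOPT : INR n + G <= OPT) by (apply score_lower; auto; lra).
  set (S0 := sum1n n s).
  assert (HS0 : 0 < S0).
  { unfold S0. destruct n as [|m]; [lia|]. simpl.
    assert (sum1n m (fun _ => 0) <= sum1n m s).
    { apply sum_le. intros; left; apply Hs; lia. }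
    rewrite sum_const in H. assert (0 < s (S m)) by (apply Hs; lia). lra. }
  set (A := AL n s Lopt alpha).
  assert (HA1 : S0 <= A).
  { apply sum_le. intros i Hi. assert (1 <= alpha ^ Lopt i) by (apply pow_R1_Rle; lra).
    assert (0 < s i) by auto. nra. }
  assert (Hak : 1 <= alpha ^ k) by (apply pow_R1_Rle; lra).
  assert (HA2 : A <= alpha ^ k * S0).
  { unfold S0; rewrite <- sum_scal. apply sum_le. intros i Hi.
    assert (alpha ^ Lopt i <= alpha ^ k) by (apply Rle_pow; [lra| apply HLo; auto]).
    assert (0 < s i) by auto. nra. }
  assert (HApos : 0 < A) by lra.
  set (bh := INR n / A).
  assert (Hbh : 0 < bh) by (unfold bh; apply Rdiv_lt_0_compat; lra).
  assert (Hmean : 1 / mean n s = INR n / S0) by (unfold mean; fold S0; field; lra).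
  assert (Hmean2 : 1 / (alpha ^ k * mean n s) = INR n / (alpha ^ k * S0)) by (unfold mean; fold S0; field; lra).
  assert (Hb0 : bh <= 1 / mean n s).
  { rewrite Hmean. unfold bh, Rdiv. apply Rmult_le_compat_l; [lra|]. apply Rinv_le_contravar; lra. }
  assert (Hb0' : 0 < 1 / mean n s) by lra.
  destruct (find_j (1 / mean n s) (1 + eps) bh) as [j [Hj1 Hj2]]; try lra.
  assert (Htj : tested n s alpha k eps j).
  { unfold tested, beta_j. apply Rle_ge. apply Rle_trans with bh; auto.
    rewrite Hmean2. unfold bh, Rdiv. apply Rmult_le_compat_l; [lra|]. apply Rinv_le_contravar; lra. }
  set (bj := beta_j n s eps j).
  assert (Hbj : bh <= bj) by exact Hj2.
  assert (Hbj2 : bj < (1 + eps) * bh).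
  { assert (Hq : 1 / mean n s / (1 + eps) ^ S j = bj / (1 + eps)).
    { assert (0 < mean n s) by (unfold mean; fold S0; apply Rdiv_lt_0_compat; lra).
      assert ((1 + eps) ^ j <> 0) by (apply pow_nonzero; lra).
      unfold bj, beta_j. simpl pow. field. repeat split; try lra; auto. }
    rewrite Hq in Hj1.
    replace bj with ((1 + eps) * (bj / (1 + eps))) by (field; lra).
    apply Rmult_lt_compat_l; lra. }
  assert (Hchain : score_exp n s (Ls j0) alpha (beta_j n s eps j0) gamma
                   <= score_exp n s Lopt alpha bj gamma).
  { apply Rle_trans with (score_exp n s (Ls j) alpha bj gamma).
    - apply Hmin; auto.
    - apply (proj2 (Hvit j Htj)); auto. }
  assert (Hbjp : 0 < bj) by lra.
  rewrite (score_decomp n s Lopt alpha bj gamma) in Hchain by lra.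
  assert (HOd : OPT = - INR n * ln bopt + bopt * A + DL n Lopt alpha gamma)
    by (unfold OPT; apply score_decomp; lra).
  set (c := bj / bh). set (x := bopt / bh).
  assert (Hc : bj = c * bh) by (unfold c; field; lra).
  assert (Hx : bopt = x * bh) by (unfold x; field; lra).
  assert (Hcp : 0 < c) by (unfold c; apply Rdiv_lt_0_compat; lra).
  assert (Hxp : 0 < x) by (unfold x; apply Rdiv_lt_0_compat; lra).
  assert (Hbha : bh * A = INR n) by (unfold bh; field; lra).
  assert (Hc1 : 1 <= c) by (unfold c; apply Rmult_le_reg_r with bh; auto; unfold Rdiv; rewrite Rmult_assoc, Rinv_l; lra).
  assert (Hc2 : c < 1 + eps) by (unfold c; apply Rmult_lt_reg_r with bh; auto; unfold Rdiv; rewrite Rmult_assoc, Rinv_l; lra).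
  pose proof (ln_ge0 c Hc1). pose proof (ln_le_xm1 x Hxp).
  rewrite Hc, ln_mult in Hchain by lra. rewrite Hx, ln_mult in HOd by lra.
  assert (Hscore : score_exp n s (Ls j0) alpha (beta_j n s eps j0) gamma <= OPT + INR n * eps).
  { assert (c * bh * A = c * INR n) by (rewrite <- Hbha; ring).
    assert (x * bh * A = x * INR n) by (rewrite <- Hbha; ring).
    fold A in Hchain. rewrite H1 in Hchain. rewrite H2 in HOd.
    assert (INR n * ln c >= 0) by nra. assert (INR n * (x - 1 - ln x) >= 0) by nra.
    assert (INR n * c <= INR n * (1 + eps)) by nra. lra. }
  assert (Hfin : eps * INR n <= eps * (OPT - G)) by (apply Rmult_le_compat_l; lra).
  split.
  - lra.
  - intros Hg1. assert (0 <= G).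
    { unfold G; rewrite <- HG. apply Rmult_le_pos; [lra|]. apply ln_ge0; lra. }
    assert (0 <= eps * G) by nra. lra.
Qed.
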